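(* Let $\Omega$ be a norm on $\mathbb{R}^p$, fix $J\subset\{1,\dots,p\}$, and let $g$ be the gauge function described in the context. Then: (1) $g$ is a norm on $\mathbb{R}^p$. (2) For every allowed set $S$ and every $\beta\in\mathbb{R}^p$: $g(\beta)\le\Upsilon_S(\beta)\le\Omega(\beta)$ and $g(\beta)\le\Upsilon_S(\beta_{f(J)})$. (3) $g$ is the dual norm of the norm $\beta\mapsto\max_{S\text{ allowed}}\max\big(\Upsilon_S^{*}(\beta),\Upsilon_S^{*}(\beta_{f(J)})\big)$; moreover, for every allowed $S$ and every $z\in\mathbb{R}^p$, $\Upsilon_S^{*}(z)=\max\big(\Omega^{*}(z_S),(\Omega^{S^{c}})^{*}(z_{S^{c}})\big)$. (4) $g(\beta_{J^{c}})\le g(\beta)$ for all $\beta\in\mathbb{R}^p$.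
   Context: For $\beta\in\mathbb{R}^p$ and $J\subset\{1,\dots,p\}$, $\beta_J$ is the vector with entries $\beta_j1\{j\in J\}$ (or its restriction to $J$, depending on context). A set $S\subset\{1,\dots,p\}$ is allowed (for $\Omega$) if there is a norm $\Omega^{S^{c}}$ on $\mathbb{R}^{|S^{c}|}$ with $\Omega(\beta_S)+\Omega^{S^{c}}(\beta_{S^{c}})\le\Omega(\beta)$ for all $\beta$; for each allowed $S$ such a norm is fixed and $\Upsilon_S(\beta):=\Omega(\beta_S)+\Omega^{S^{c}}(\beta_{S^{c}})$. For a norm $N$, $N^{*}(z):=\sup_{N(\beta)\le1}\beta^{T}z$ is its dual norm. Let $\beta_{f(J)}:=\beta_J-\beta_{J^{c}}$ and $\mathrm{flip}_J(B):=\{\beta_{f(J)}:\beta\in B\}$ for $B\subset\mathbb{R}^p$. Let $\overline{B}:=\bigcup_{S\text{ allowed}}\{\beta:\Upsilon_S(\beta)\le1\}$, $B_g:=\mathrm{Conv}(\overline{B}\cup\mathrm{flip}_J(\overline{B}))$, and $g(x):=\inf\{t>0:x\in tB_g\}$. *)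

(* Defs.v *)
From HB Require Import structures.
From mathcomp Require Import all_boot all_order all_algebra.
From mathcomp Require Import boolp classical_sets reals.
Set Implicit Arguments. Unset Strict Implicit. Unset Printing Implicit Defensive.
Import Order.TTheory GRing.Theory Num.Theory.
Local Open Scope ring_scope.
Local Open Scope classical_set_scope.

Section Defs.
Variables (R : realType) (p : nat).
Notation vec := 'rV[R]_p.

Definition restr (J : {set 'I_p}) (b : vec) : vec :=
  \row_j (if j \in J then b ord0 j else 0).

(* beta_{f(J)} := beta_J - beta_{J^c} *)
Definition flipv (J : {set 'I_p}) (b : vec) : vec := restr J b - restr (~: J) b.

Definition flipset (J : {set 'I_p}) (B : set vec) : set vec := flipv J @` B.

Definition supported (A : {set 'I_p}) (b : vec) : Prop := forall j, j \notin A -> b ord0 j = 0.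

(* N is a norm on the coordinate subspace R^A (identified with R^{|A|}) *)
Definition is_norm_on (A : {set 'I_p}) (N : vec -> R) : Prop :=
  [/\ forall b, supported A b -> 0 <= N b,
      forall b, supported A b -> N b = 0 -> b = 0,
      forall (t : R) b, supported A b -> N (t *: b) = `|t| * N b &
      forall b c, supported A b -> supported A c -> N (b + c) <= N b + N c].

Definition is_norm (N : vec -> R) : Prop := is_norm_on [set: 'I_p]%SET N.

Definition dotv (b z : vec) : R := \sum_j b ord0 j * z ord0 j.

Definition dual_on (A : {set 'I_p}) (N : vec -> R) (z : vec) : R :=
  sup [set dotv b z | b in [set b | supported A b /\ N b <= 1]].

Definition dual (N : vec -> R) (z : vec) : R := dual_on [set: 'I_p]%SET N z.

Definition allowed (Om : vec -> R) (S : {set 'I_p}) : Prop :=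
  exists N : vec -> R, is_norm_on (~: S) N /\
    forall b, Om (restr S b) + N (restr (~: S) b) <= Om b.

Definition Upsilon (Om : vec -> R) (OmS : {set 'I_p} -> vec -> R) (S : {set 'I_p}) (b : vec) : R :=
  Om (restr S b) + OmS S (restr (~: S) b).

Definition conv_hull (A : set vec) : set vec :=
  [set x | exists n (w : 'I_n -> R) (a : 'I_n -> vec),
     [/\ forall i, 0 <= w i, \sum_i w i = 1, forall i, A (a i) & x = \sum_i w i *: a i]].

Definition Bbar (Om : vec -> R) (OmS : {set 'I_p} -> vec -> R) : set vec :=
  \bigcup_(S in [set S | allowed Om S]) [set b | Upsilon Om OmS S b <= 1].

Definition Bg Om OmS (J : {set 'I_p}) : set vec :=
  conv_hull (Bbar Om OmS `|` flipset J (Bbar Om OmS)).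

Definition gauge (B : set vec) (x : vec) : R :=
  inf [set t | 0 < t /\ exists2 b, B b & x = t *: b].

Definition g Om OmS J : vec -> R := gauge (Bg Om OmS J).

Definition gdual Om OmS (J : {set 'I_p}) (b : vec) : R :=
  \big[Num.max/0]_(S : {set 'I_p} | `[< allowed Om S >])
     Num.max (dual (Upsilon Om OmS S) b) (dual (Upsilon Om OmS S) (flipv J b)).

End Defs.

(* Main.v *)
From mathcomp Require Import all_classical all_reals all_analysis.
From mathcomp Require Import ring lra.
Require Import Defs.
From HB Require Import structures.
From mathcomp Require Import all_boot all_order all_algebra.
From mathcomp Require Import boolp classical_sets reals.
Import Order.TTheory GRing.Theory Num.Theory.
Import numFieldTopology.Exports numFieldNormedType.Exports.
Local Open Scope ring_scope.
Local Open Scope classical_set_scope.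
Set Implicit Arguments. Unset Strict Implicit. Unset Printing Implicit Defensive.
Section Basics.
Variables (R : realType) (p : nat).
Local Notation vec := 'rV[R]_p.
Implicit Types (A S J : {set 'I_p}) (b c z : vec).

Lemma restrE A b i j : restr A b i j = if j \in A then b i j else 0.
Proof. by rewrite mxE (ord1 i). Qed.

Lemma restrD A b c : restr A (b + c) = restr A b + restr A c.
Proof. by apply/rowP => j; rewrite !mxE; case: ifP => _; rewrite ?addr0. Qed.

Lemma restrZ A (t : R) b : restr A (t *: b) = t *: restr A b.
Proof. by apply/rowP => j; rewrite !mxE; case: ifP => _; rewrite ?mulr0. Qed.

Lemma restrN A b : restr A (- b) = - restr A b.
Proof. by apply/rowP => j; rewrite !mxE; case: ifP => _; rewrite ?oppr0. Qed.

Lemma restrB A b c : restr A (b - c) = restr A b - restr A c.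
Proof. by rewrite restrD restrN. Qed.

Lemma restr0 A : restr A (0 : vec) = 0.
Proof. by apply/rowP => j; rewrite !mxE; case: ifP. Qed.

Lemma restr_supp A b : supported A (restr A b).
Proof. by move=> j /negbTE jA; rewrite mxE jA. Qed.

Lemma restr_id A b : supported A b -> restr A b = b.
Proof.
move=> sb; apply/rowP => j; rewrite !mxE; case: ifP => // /negbT jA.
by rewrite sb.
Qed.

Lemma restrC A b : restr A b + restr (~: A) b = b.
Proof.
by apply/rowP => j; rewrite !mxE inE; case: ifP => _; rewrite ?addr0 ?add0r.
Qed.

Lemma restr_restr A B b : restr A (restr B b) = restr (A :&: B) b.
Proof.
by apply/rowP => j; rewrite !mxE inE; case: (j \in A); case: (j \in B).
Qed.

Lemma restrT b : restr [set: 'I_p]%SET b = b.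
Proof. by apply/rowP => j; rewrite !mxE inE. Qed.

Lemma supp0 A : supported A (0 : vec).
Proof. by move=> j _; rewrite mxE. Qed.

Lemma suppD A b c : supported A b -> supported A c -> supported A (b + c).
Proof. by move=> sb sc j jA; rewrite mxE sb ?sc ?addr0. Qed.

Lemma suppZ A (t : R) b : supported A b -> supported A (t *: b).
Proof. by move=> sb j jA; rewrite mxE sb ?mulr0. Qed.

Lemma suppN A b : supported A b -> supported A (- b).
Proof. by move=> sb j jA; rewrite mxE sb ?oppr0. Qed.

Lemma suppB A b c : supported A b -> supported A c -> supported A (b - c).
Proof. by move=> sb sc; apply: suppD => //; apply: suppN. Qed.

Lemma suppT b : supported [set: 'I_p]%SET b.
Proof. by move=> j; rewrite inE. Qed.

Lemma supp_restr A B b : supported A b -> supported A (restr B b).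
Proof. by move=> sb j jA; rewrite mxE sb //; case: ifP. Qed.

Lemma dotvDl b c z : dotv (b + c) z = dotv b z + dotv c z.
Proof. by rewrite /dotv -big_split /=; apply: eq_bigr => j _; rewrite mxE mulrDl. Qed.

Lemma dotvDr b z w : dotv b (z + w) = dotv b z + dotv b w.
Proof. by rewrite /dotv -big_split /=; apply: eq_bigr => j _; rewrite mxE mulrDr. Qed.

Lemma dotvZl (t : R) b z : dotv (t *: b) z = t * dotv b z.
Proof. by rewrite /dotv mulr_sumr; apply: eq_bigr => j _; rewrite mxE mulrA. Qed.

Lemma dotvZr (t : R) b z : dotv b (t *: z) = t * dotv b z.
Proof.
by rewrite /dotv mulr_sumr; apply: eq_bigr => j _; rewrite mxE mulrCA.
Qed.

Lemma dotvNl b z : dotv (- b) z = - dotv b z.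
Proof. by rewrite -scaleN1r dotvZl mulN1r. Qed.

Lemma dotvNr b z : dotv b (- z) = - dotv b z.
Proof. by rewrite -scaleN1r dotvZr mulN1r. Qed.

Lemma dotv0l z : dotv 0 z = 0.
Proof. by rewrite /dotv big1 // => j _; rewrite mxE mul0r. Qed.

Lemma dotv0r b : dotv b 0 = 0.
Proof. by rewrite /dotv big1 // => j _; rewrite mxE mulr0. Qed.

Lemma dotv_restr A b z : dotv (restr A b) z = dotv b (restr A z).
Proof.
rewrite /dotv; apply: eq_bigr => j _; rewrite !mxE.
by case: ifP => _; rewrite ?mul0r ?mulr0.
Qed.

Lemma flipvE J b i j : flipv J b i j = if j \in J then b i j else - b i j.
Proof.
by rewrite !mxE inE (ord1 i); case: (j \in J) => /=; rewrite ?subr0 ?sub0r.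
Qed.

Lemma flipvK J b : flipv J (flipv J b) = b.
Proof. by apply/rowP => j; rewrite !flipvE; case: (j \in J); rewrite ?opprK. Qed.

Lemma flipvD J b c : flipv J (b + c) = flipv J b + flipv J c.
Proof. by apply/rowP => j; rewrite !(flipvE, mxE); case: (j \in J); rewrite ?opprD. Qed.

Lemma flipvZ J (t : R) b : flipv J (t *: b) = t *: flipv J b.
Proof. by apply/rowP => j; rewrite !(flipvE, mxE); case: (j \in J); rewrite ?mulrN. Qed.

Lemma flipvN J b : flipv J (- b) = - flipv J b.
Proof. by rewrite -scaleN1r flipvZ scaleN1r. Qed.

Lemma flipv0 J : flipv J (0 : vec) = 0.
Proof. by rewrite -(scale0r 0) flipvZ !scale0r. Qed.

Lemma dotv_flip J b z : dotv (flipv J b) z = dotv b (flipv J z).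
Proof.
rewrite /dotv; apply: eq_bigr => j _; rewrite !flipvE.
by case: (j \in J); rewrite ?mulNr ?mulrN.
Qed.

Lemma flip_restrC J b : restr (~: J) b = (1/2 : R) *: (b - flipv J b).
Proof.
apply/rowP => j; rewrite restrE mxE.
have -> : (b - flipv J b) 0 j = b 0 j - flipv J b 0 j by rewrite !mxE.
rewrite flipvE inE; case: (j \in J) => /=.
  by rewrite subrr mulr0.
rewrite opprK; lra.
Qed.

End Basics.

Lemma restr_sum (R : realType) (p : nat) (A : {set 'I_p}) (I : finType) (F : I -> 'rV[R]_p) :
  restr A (\sum_i F i) = \sum_i restr A (F i).
Proof. exact: (big_morph (restr A) (@restrD R p A) (@restr0 R p A)). Qed.

Section Norms.
Variables (R : realType) (p : nat).
Local Notation vec := 'rV[R]_p.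
Implicit Types (A S J : {set 'I_p}) (b c z : vec).

Lemma coord_le_norm (b : vec) i j : `|b i j| <= `|b|.
Proof.
rewrite -[`|b|]/(mx_norm b) mx_normrE; apply/bigmax_geP; right => /=.
by exists (i, j).
Qed.

Lemma norm_le_coord (b : vec) (M : R) : 0 <= M -> (forall j, `|b ord0 j| <= M) -> `|b| <= M.
Proof.
move=> M0 H; rewrite -[`|b|]/(mx_norm b) mx_normrE; apply/bigmax_leP; split => //.
by move=> [i j] _ /=; rewrite (ord1 i).
Qed.

Lemma norm_restr_le A b : `|restr A b| <= `|b|.
Proof.
apply: norm_le_coord => // j; rewrite restrE; case: ifP => _.
  exact: coord_le_norm.
by rewrite normr0.
Qed.

Lemma lip_continuous (f : vec -> R) (k : R) : 0 < k ->
  (forall x y, `|f x - f y| <= k * `|x - y|) -> continuous f.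
Proof.
move=> k0 H x; apply/(@cvgrPdist_lt _ _ _ (nbhs x) (nbhs_filter x)) => e e0; near=> z.
rewrite (le_lt_trans (H _ _)) // -ltr_pdivlMl //.
near: z; apply: cvgr_dist_lt => //; by rewrite mulrC divr_gt0.
Unshelve. all: by end_near. Qed.

Variables (A : {set 'I_p}) (N : vec -> R).
Hypothesis hN : is_norm_on A N.

Lemma nN_ge0 b : supported A b -> 0 <= N b.
Proof. by move: hN; rewrite /is_norm_on => -[]; auto. Qed.

Lemma nN_eq0 b : supported A b -> N b = 0 -> b = 0.
Proof. by move: hN; rewrite /is_norm_on => -[]; auto. Qed.

Lemma nNZ (t : R) b : supported A b -> N (t *: b) = `|t| * N b.
Proof. by move: hN; rewrite /is_norm_on => -[]; auto. Qed.

Lemma nND b c : supported A b -> supported A c -> N (b + c) <= N b + N c.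
Proof. by move: hN; rewrite /is_norm_on => -[]; auto. Qed.

Lemma nN0 : N 0 = 0.
Proof. by have := nNZ 0 (@supp0 R p A); rewrite scale0r normr0 mul0r. Qed.

Lemma nNN b : supported A b -> N (- b) = N b.
Proof. by move=> sb; rewrite -scaleN1r nNZ // normrN normr1 mul1r. Qed.

Lemma nN_lip b c : supported A b -> supported A c -> `|N b - N c| <= N (b - c).
Proof.
move=> sb sc.
have h1 : N b <= N (b - c) + N c by have := nND (suppB sb sc) sc; rewrite subrK.
have h2 : N c <= N b + N (b - c).
  have := nND sb (suppN (suppB sb sc)).
  by rewrite (nNN (suppB sb sc)) opprB addrC subrK.
rewrite ler_norml; apply/andP; split; lra.
Qed.

Lemma nN_sum (I : finType) (F : I -> vec) : (forall i, supported A (F i)) ->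
  N (\sum_i F i) <= \sum_i N (F i).
Proof.
move=> sF.
suff [] : supported A (\sum_i F i) /\ N (\sum_i F i) <= \sum_i N (F i) by [].
elim/big_ind2: _ => [|x1 x2 y1 y2 [s1 h1] [s2 h2]|i _].
- by rewrite nN0; split => //; exact: supp0.
- split; first exact: suppD.
  by rewrite (le_trans (nND s1 s2)) // lerD.
- by split.
Qed.

Definition ev (j : 'I_p) : vec := \row_k (k == j)%:R.

Lemma vec_decomp b : b = \sum_j b ord0 j *: ev j.
Proof.
apply/rowP => k; rewrite summxE (bigD1 k) //= big1 => [|j jk].
  by rewrite !mxE eqxx mulr1 addr0 (ord1 _).
by rewrite !mxE eq_sym (negbTE jk) mulr0.
Qed.

Definition LN := \sum_j N (restr A (ev j)).

Lemma LN_ge0 : 0 <= LN.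
Proof. by apply: sumr_ge0 => j _; apply: nN_ge0; apply: restr_supp. Qed.

Lemma nN_le b : supported A b -> N b <= LN * `|b|.
Proof.
move=> sb; rewrite -(restr_id sb) {1}(vec_decomp b) restr_sum.
under eq_bigr do rewrite restrZ.
have sF : forall j, supported A (b ord0 j *: restr A (ev j)).
  by move=> j; apply: suppZ; apply: restr_supp.
apply: (le_trans (nN_sum sF)).
rewrite /LN mulr_suml ler_sum // => j _.
rewrite nNZ; last exact: restr_supp.
rewrite (mulrC (N (restr A (ev j)))); apply: ler_wpM2r; first by apply: nN_ge0; exact: restr_supp.
by rewrite (restr_id sb) coord_le_norm.
Qed.

Lemma norm_lb : exists2 m : R, 0 < m & forall b, supported A b -> m * `|b| <= N b.
Proof.
pose K := [set v : vec | forall i, `[-1, 1]%classic (v ord0 i)].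
have cK : compact K.
  have := @rV_compact R p (fun=> `[-1, 1]%classic) (fun=> @segment_compact R (-1) 1).
  exact.
have K0 : K !=set0 by exists 0 => i /=; rewrite mxE in_itv /=; apply/andP; split; lra.
pose phi v := N (restr A v) + 1 - `|restr A v|.
have [c Kc Hc] : exists2 c, K c & forall t, K t -> phi c <= phi t.
  have [|c cK' Hc] := @EVT_min_rV R p phi K K0 cK.
    apply: continuous_subspaceT; apply: (@lip_continuous _ (LN + 1)).
      by have := LN_ge0; lra.
    move=> x y; rewrite /phi.
    have e1 := nN_lip (restr_supp (A:=A) x) (restr_supp (A:=A) y).
    have e3 := nN_le (suppB (restr_supp (A:=A) x) (restr_supp (A:=A) y)).
    have e4 := @norm_restr_le A (x - y).
    rewrite -restrB in e1 e3.
    have e5 := LN_ge0.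
    have e6 := ler_dist_dist (restr A x) (restr A y).
    rewrite -restrB in e6.
    have e7 : LN * `|restr A (x - y)| <= LN * `|x - y| by rewrite ler_wpM2l.
    set u := N (restr A x) in e1 *; set w := N (restr A y) in e1 *.
    set nx := `|restr A x| in e6 *; set ny := `|restr A y| in e6 *.
    have -> : u + 1 - nx - (w + 1 - ny) = (u - w) - (nx - ny) by ring.
    rewrite (le_trans (ler_normB _ _)) //.
    rewrite mulrDl mul1r lerD //; last exact: (le_trans e6 e4).
    exact: (le_trans e1 (le_trans e3 e7)).
  by exists c; [exact: set_mem | move=> t Kt; apply: Hc; exact: mem_set].
have nc : `|restr A c| <= 1.
  apply: norm_le_coord => // j; rewrite restrE; case: ifP => _; last by rewrite normr0.
  by have := Kc j; rewrite /= in_itv /= ler_norml.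
exists (phi c).
  rewrite /phi; have [->|c0] := eqVneq (restr A c) 0.
    by rewrite nN0 normr0; lra.
  have : 0 < N (restr A c).
    rewrite lt_def (nN_ge0 (restr_supp (A:=A) c)) andbT; apply/eqP => /(nN_eq0 (restr_supp (A:=A) c)).
    by move/eqP: c0.
  lra.
move=> b sb; have [->|b0] := eqVneq b 0; first by rewrite normr0 mulr0 nN0.
have nb : 0 < `|b| by rewrite normr_gt0.
pose v := `|b|^-1 *: b.
have sv : supported A v by apply: suppZ.
have nv : `|v| = 1 by rewrite normrZ normfV normr_id mulVf // gt_eqF.
have Kv : K v.
  move=> i /=; rewrite in_itv /=; rewrite -ler_norml -nv; exact: coord_le_norm.
have := Hc v Kv; rewrite /phi (restr_id sv) nv nNZ // normfV normr_id.
rewrite -ler_pdivlMr // => H; apply: (le_trans H); rewrite mulrC; lra.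
Qed.

End Norms.

Lemma sup_ge_el (R : realType) (E : set R) x : has_ubound E -> E x -> x <= sup E.
Proof. by move=> hE Ex; apply: ub_le_sup. Qed.

Lemma sup_le_M (R : realType) (E : set R) M : E !=set0 -> (forall x, E x -> x <= M) -> sup E <= M.
Proof. by move=> E0 H; apply: ge_sup => //; apply/ubP. Qed.

Section Dual.
Variables (R : realType) (p : nat).
Local Notation vec := 'rV[R]_p.
Implicit Types (b c z w : vec).

Lemma dotv_le b z : dotv b z <= `|b| * \sum_j `|z ord0 j|.
Proof.
rewrite /dotv mulr_sumr; apply: ler_sum => j _.
apply: (le_trans (ler_norm _)); rewrite normrM ler_wpM2r //.
exact: coord_le_norm.
Qed.

Variables (A : {set 'I_p}) (N : vec -> R).
Hypothesis hN : is_norm_on A N.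

Let D z := [set dotv b z | b in [set b | supported A b /\ N b <= 1]].

Lemma D_ub z : has_ubound (D z).
Proof.
have [m m0 Hm] := norm_lb hN.
exists (m^-1 * \sum_j `|z ord0 j|) => _ [b [sb Nb] <-].
apply: (le_trans (dotv_le b z)); rewrite ler_wpM2r ?sumr_ge0 //.
rewrite -[leRHS]mulr1 ler_pdivlMl //; exact: (le_trans (Hm b sb)).
Qed.

Lemma D_n0 z : D z !=set0.
Proof. by exists 0, 0; [split; [exact: supp0 | rewrite (nN0 hN)] | exact: dotv0l]. Qed.

Lemma dual_ge b z : supported A b -> N b <= 1 -> dotv b z <= dual_on A N z.
Proof. by move=> sb Nb; apply: sup_ge_el; [exact: D_ub | exists b]. Qed.

Lemma dual_le z M : (forall b, supported A b -> N b <= 1 -> dotv b z <= M) ->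
  dual_on A N z <= M.
Proof. by move=> H; apply: sup_le_M; [exact: D_n0 | move=> _ [b [sb Nb] <-]; exact: H]. Qed.

Lemma dual_ge0 z : 0 <= dual_on A N z.
Proof. by rewrite -(dotv0l z); apply: dual_ge; [exact: supp0 | rewrite (nN0 hN)]. Qed.

Lemma dual_mul b z : supported A b -> dotv b z <= dual_on A N z * N b.
Proof.
move=> sb; have [/(nN_eq0 hN sb) ->|Nb0] := eqVneq (N b) 0.
  by rewrite dotv0l (nN0 hN) mulr0.
have Nb : 0 < N b by rewrite lt_def Nb0 (nN_ge0 hN sb).
have := @dual_ge ((N b)^-1 *: b) z (suppZ _ sb).
rewrite (nNZ hN _ sb) dotvZl normfV (gtr0_norm Nb) mulVf // lexx => /(_ isT).
by move=> h; rewrite -ler_pdivrMr // mulrC.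
Qed.

Lemma dual_abs b z : supported A b -> `|dotv b z| <= dual_on A N z * N b.
Proof.
move=> sb; rewrite ler_norml dual_mul // andbT lerNl -dotvNl.
by rewrite -(nNN hN sb) dual_mul //; exact: suppN.
Qed.

Lemma dualZ (t : R) z : dual_on A N (t *: z) = `|t| * dual_on A N z.
Proof.
apply/eqP; rewrite eq_le; apply/andP; split.
  apply: dual_le => b sb Nb; rewrite dotvZr.
  apply: (le_trans (ler_norm _)); rewrite normrM ler_wpM2l //.
  apply: (le_trans (dual_abs z sb)); rewrite -[X in _ <= X]mulr1 ler_wpM2l //.
  exact: dual_ge0.
have [->|t0] := eqVneq t 0; first by rewrite normr0 mul0r dual_ge0.
rewrite -ler_pdivlMl ?normr_gt0 //; apply: dual_le => b sb Nb.
have -> : dotv b z = t^-1 * dotv b (t *: z) by rewrite dotvZr mulKf.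
apply: (le_trans (ler_norm _)); rewrite normrM normfV ler_wpM2l ?invr_ge0 //.
apply: (le_trans (dual_abs _ sb)); rewrite -[X in _ <= X]mulr1 ler_wpM2l //.
exact: dual_ge0.
Qed.

Lemma dualD z w : dual_on A N (z + w) <= dual_on A N z + dual_on A N w.
Proof.
apply: dual_le => b sb Nb; rewrite dotvDr lerD //; exact: dual_ge.
Qed.

Lemma dualN z : dual_on A N (- z) = dual_on A N z.
Proof. by rewrite -scaleN1r dualZ normrN normr1 mul1r. Qed.

Lemma dual_eq0 z : dual_on A N z = 0 -> restr A z = 0.
Proof.
move=> d0; apply/rowP => j; rewrite restrE mxE; case: ifP => // jA.
have sj : supported A (restr A (@ev R p j)) by exact: restr_supp.
have := dual_abs z sj; rewrite d0 mul0r normr_le0 => /eqP <-.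
rewrite dotv_restr /dotv (bigD1 j) //= big1 => [|k kj].
  by rewrite !mxE eqxx jA mul1r addr0 (ord1 _).
by rewrite !mxE (negbTE kj) mul0r.
Qed.

End Dual.

Section HB.
Variables (R : realType) (p : nat).
Local Notation vec := 'rV[R]_p.
Implicit Types (b c e x y z : vec) (q : vec -> R).

Definition sublin q := (forall x y, q (x + y) <= q x + q y) /\
  (forall (t : R) x, 0 <= t -> q (t *: x) = t * q x).

Lemma sublin0 q : sublin q -> q 0 = 0.
Proof. by case=> _ H; have := H 0 0 (lexx _); rewrite scale0r mul0r. Qed.

Definition redset q e x := [set q (x + t *: e) - t * q e | t in [set t : R | 0 <= t]].
Definition reduce q e x := inf (redset q e x).

Section Red.
Variables (q : vec -> R) (e : vec).
Hypothesis hq : sublin q.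

Lemma redset_lb x (r : R) : redset q e x r -> - q (- x) <= r.
Proof.
case: hq => hD hZ [t t0 <-].
have := hD (x + t *: e) (- x); rewrite addrC addKr hZ //; lra.
Qed.

Lemma redset_n0 x : redset q e x !=set0.
Proof. exists (q (x + 0 *: e) - 0 * q e); rewrite /redset /=; exists 0 => //=. Qed.

Lemma redset_hl x : has_lbound (redset q e x).
Proof. by exists (- q (- x)) => r; apply: redset_lb. Qed.

Lemma red_le_el x t : 0 <= t -> reduce q e x <= q (x + t *: e) - t * q e.
Proof. by move=> t0; apply: ge_inf; [exact: redset_hl | exists t]. Qed.

Lemma red_ge M x : (forall t, 0 <= t -> M <= q (x + t *: e) - t * q e) -> M <= reduce q e x.
Proof. by move=> H; apply: lb_le_inf; [exact: redset_n0 | move=> _ [t t0 <-]; exact: H]. Qed.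

Lemma red_le x : reduce q e x <= q x.
Proof. by have := red_le_el x (lexx 0); rewrite scale0r addr0 mul0r subr0. Qed.

Lemma red_lb x : - q (- x) <= reduce q e x.
Proof. by apply: red_ge => t t0; apply: redset_lb; exists t. Qed.

Lemma red_sublin : sublin (reduce q e).
Proof.
case: hq => hD hZ; split.
  move=> x y.
  suff H : forall t, 0 <= t -> reduce q e (x + y) - (q (y + t *: e) - t * q e) <= reduce q e x.
    suff H2 : reduce q e (x + y) - reduce q e x <= reduce q e y by lra.
    by apply: red_ge => t t0; have := H t t0; lra.
  move=> t t0; apply: red_ge => s s0.
  have h1 := red_le_el (x + y) (addr_ge0 s0 t0).
  have h2 := hD (x + s *: e) (y + t *: e).
  rewrite addrACA -scalerDl in h2; rewrite mulrDl in h1; lra.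
move=> c x c0; have [->|cn0] := eqVneq c 0.
  rewrite scale0r mul0r; apply/eqP; rewrite eq_le; apply/andP; split.
    by have := red_le 0; rewrite (sublin0 hq).
  by have := red_lb 0; rewrite oppr0 (sublin0 hq) oppr0.
have cp : 0 < c by rewrite lt_def cn0.
apply/eqP; rewrite eq_le; apply/andP; split.
  suff H : c^-1 * reduce q e (c *: x) <= reduce q e x.
    by rewrite ler_pdivrMl in H.
  apply: red_ge => t t0; rewrite ler_pdivrMl //.
  apply: (le_trans (red_le_el _ (mulr_ge0 c0 t0))).
  by rewrite -scalerA -scalerDr hZ // mulrBr mulrA.
apply: red_ge => t t0.
have tc : 0 <= t / c by rewrite divr_ge0.
have := red_le_el x tc; rewrite -(ler_pM2l cp) => H; apply: (le_trans H).
rewrite mulrBr -hZ // scalerDr scalerA mulrCA mulfV // mulr1 mulrA mulrCA mulfV //.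
by rewrite mulr1.
Qed.

Lemma red_e : reduce q e e + reduce q e (- e) = 0.
Proof.
have h1 : reduce q e e = q e.
  apply/eqP; rewrite eq_le red_le /=; apply: red_ge => t t0.
  case: hq => _ hZ.
  have -> : e + t *: e = (1 + t) *: e by rewrite scalerDl scale1r.
  rewrite hZ; last by lra.
  rewrite mulrDl mul1r.
  lra.
have h2 : reduce q e (- e) = - q e.
  apply/eqP; rewrite eq_le; apply/andP; split.
    have := red_le_el (- e) ler01; rewrite scale1r addNr (sublin0 hq) mul1r sub0r //.
  by have := red_lb (- e); rewrite opprK.
by rewrite h1 h2 subrr.
Qed.

End Red.

Lemma additive_pres q q' e : sublin q -> sublin q' -> (forall x, q' x <= q x) ->
  q e + q (- e) = 0 -> q' e + q' (- e) = 0.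
Proof.
move=> hq [hD hZ] le H; apply/eqP; rewrite eq_le; apply/andP; split.
  by rewrite -H lerD.
by have := hD e (- e); rewrite subrr (sublin0 (conj hD hZ)).
Qed.

Lemma additive_lin q e : sublin q -> q e + q (- e) = 0 ->
  forall x (s : R), q (x + s *: e) = q x + s * q e.
Proof.
move=> [hD hZ] H.
have hs : forall s : R, q (s *: e) = s * q e.
  move=> s; have [s0|s0] := leP 0 s; first exact: hZ.
  have -> : s *: e = (- s) *: (- e) by rewrite scaleNr scalerN opprK.
  rewrite hZ; last by lra.
  have -> : q (- e) = - q e by lra.
  by rewrite mulrNN.
move=> x s; apply/eqP; rewrite eq_le; apply/andP; split.
  by rewrite -hs hD.
have := hD (x + s *: e) (- (s *: e)); rewrite addrK -scaleNr hs; lra.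
Qed.

Lemma HB_list (L : seq vec) q : sublin q -> exists q', [/\ sublin q',
  (forall x, q' x <= q x) & (forall e, e \in L -> q' e + q' (- e) = 0)].
Proof.
elim: L q => [|e L IH] q hq.
  exists q; split => // e; by rewrite in_nil.
have hq1 := red_sublin e hq.
have [q' [hq' le' ad']] := IH _ hq1.
exists q'; split => //.
  by move=> x; apply: (le_trans (le' x)); exact: red_le.
move=> e'; rewrite in_cons => /orP[/eqP ->|]; last exact: ad'.
by apply: (additive_pres hq1 hq' le'); exact: red_e.
Qed.

Lemma HB_dot q b : sublin q ->
  exists z, (forall x, dotv x z <= q x) /\ dotv b z = q b.
Proof.
move=> hq; have hq1 := red_sublin b hq.
have [q' [hq' le' ad']] := HB_list [seq @ev R p j | j <- enum 'I_p] hq1.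
pose z := \row_j q' (@ev R p j).
have lin : forall x, q' x = dotv x z.
  move=> x; rewrite {1}(vec_decomp x) /dotv.
  elim/big_rec2: _ => [|j s1 s2 _ IH]; first exact: sublin0.
  rewrite addrC additive_lin //; last by apply: ad'; apply: map_f; rewrite mem_enum.
  by rewrite IH mxE addrC.
exists z; split.
  by move=> x; rewrite -lin; apply: (le_trans (le' x)); exact: red_le.
rewrite -lin; apply/eqP; rewrite eq_le; apply/andP; split.
  by apply: (le_trans (le' b)); exact: red_le.
have hb := red_e b hq.
have h1 : q' (- b) <= reduce q b (- b) by exact: le'.
have hb2 : reduce q b b = q b.
  apply/eqP; rewrite eq_le red_le //=; apply: red_ge => // t t0.
  case: hq => _ hZ.
  have -> : b + t *: b = (1 + t) *: b by rewrite scalerDl scale1r.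
  rewrite hZ; last by lra.
  rewrite mulrDl mul1r.
  lra.
have h0 := sublin0 hq'.
have := hq'.1 b (- b); rewrite subrr h0.
lra.
Qed.

End HB.

Lemma split_l n m (i : 'I_n) : split (lshift m i) = inl i.
Proof. exact: (unsplitK (inl i)). Qed.
Lemma split_r n m (j : 'I_m) : split (rshift n j) = inr j.
Proof. exact: (unsplitK (inr j)). Qed.

Section Conv.
Variables (R : realType) (p : nat).
Local Notation vec := 'rV[R]_p.

Lemma conv_in (A : set vec) x : A x -> conv_hull A x.
Proof.
move=> Ax; exists 1%N, (fun=> 1), (fun=> x); split => //.
  by rewrite big_ord1.
by rewrite big_ord1 scale1r.
Qed.

Lemma conv_comb (A : set vec) x y (l : R) : 0 <= l <= 1 ->
  conv_hull A x -> conv_hull A y -> conv_hull A (l *: x + (1 - l) *: y).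
Proof.
move=> /andP[l0 l1] [n [w [a [w0 w1 aA ->]]]] [m [v [c [v0 v1 cA ->]]]].
pose w' (i : 'I_(n + m)) := match split i with inl i => l * w i | inr j => (1 - l) * v j end.
pose a' (i : 'I_(n + m)) := match split i with inl i => a i | inr j => c j end.
exists (n + m)%N, w', a'; split.
- move=> i; rewrite /w'; case: (split i) => k; apply: mulr_ge0 => //; lra.
- rewrite big_split_ord /w'.
  under eq_bigr do rewrite split_l.
  under [X in _ + X = _]eq_bigr do rewrite split_r.
  by rewrite -!mulr_sumr w1 v1 !mulr1 addrC subrK.
- by move=> i; rewrite /a'; case: (split i).
- rewrite big_split_ord /w' /a'.
  under eq_bigr do rewrite split_l.
  under [X in _ = _ + X]eq_bigr do rewrite split_r.
  rewrite !scaler_sumr; congr (_ + _); apply: eq_bigr => i _; by rewrite scalerA.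
Qed.

Lemma conv_map (A A' : set vec) (f : vec -> vec) x :
  (forall y z, f (y + z) = f y + f z) -> (forall (t : R) y, f (t *: y) = t *: f y) ->
  (forall y, A y -> A' (f y)) -> f 0 = 0 -> conv_hull A x -> conv_hull A' (f x).
Proof.
move=> fD fZ fA f0 [n [w [a [w0 w1 aA ->]]]].
exists n, w, (fun i => f (a i)); split => //; first by move=> i; apply: fA.
rewrite (big_morph f fD f0); apply: eq_bigr => i _; exact: fZ.
Qed.

Lemma conv_bound (A : set vec) (C : R) x : (forall y, A y -> `|y| <= C) ->
  conv_hull A x -> `|x| <= C.
Proof.
move=> HA [n [w [a [w0 w1 aA ->]]]].
apply: (le_trans (ler_norm_sum _ _ _)).
have -> : C = \sum_i w i * C by rewrite -mulr_suml w1 mul1r.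
apply: ler_sum => i _; rewrite normrZ ger0_norm // ler_wpM2l //; exact: HA.
Qed.

Lemma dotv_sum (I : finType) (F : I -> vec) z : dotv (\sum_i F i) z = \sum_i dotv (F i) z.
Proof. exact: (big_morph (fun b => dotv b z) (fun b c => dotvDl b c z) (dotv0l z)). Qed.

Lemma conv_dot (A : set vec) z (M : R) x : (forall y, A y -> dotv y z <= M) ->
  conv_hull A x -> dotv x z <= M.
Proof.
move=> HA [n [w [a [w0 w1 aA ->]]]].
rewrite dotv_sum.
have -> : M = \sum_i w i * M by rewrite -mulr_suml w1 mul1r.
apply: ler_sum => i _; rewrite dotvZl ler_wpM2l //; exact: HA.
Qed.

End Conv.

Section Main.
Variables (R : realType) (p : nat) (Om : 'rV[R]_p -> R)
  (OmS : {set 'I_p} -> 'rV[R]_p -> R) (J : {set 'I_p}).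
Local Notation vec := 'rV[R]_p.
Hypothesis hOm : is_norm Om.
Hypothesis hA : forall S, allowed Om S ->
     is_norm_on (~: S) (OmS S) /\
     forall b, Om (restr S b) + OmS S (restr (~: S) b) <= Om b.
Implicit Types (b c x y z : vec) (S : {set 'I_p}).

Local Notation U := (Upsilon Om OmS).

Lemma allowedT : allowed Om [set: 'I_p]%SET.
Proof.
exists (fun=> 0); split; last by move=> b /=; rewrite addr0 restrT.
split => //.
- move=> b sb _; apply/rowP => j; rewrite mxE; apply: sb; by rewrite !inE.
by move=> t b _; rewrite mulr0.
Qed.

Lemma restrCr S b : restr (~: S) (restr S b) = 0.
Proof. by apply/rowP => j; rewrite !mxE inE; case: (j \in S). Qed.

Lemma restr_out S b : supported (~: S) b -> restr S b = 0.
Proof.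
move=> sb; apply/rowP => j; rewrite !mxE; case: ifP => // jS.
by rewrite sb // inE jS.
Qed.

Section AllowedS.
Variable S : {set 'I_p}.
Hypothesis hS : allowed Om S.

Let hOS := (hA hS).1.
Let hle := (hA hS).2.

Lemma U_ge0 b : 0 <= U S b.
Proof.
by apply: addr_ge0; [exact: (nN_ge0 hOm (suppT _)) | exact: (nN_ge0 hOS (restr_supp _))].
Qed.

Lemma U_le b : U S b <= Om b.
Proof. exact: hle. Qed.

Lemma U_norm : is_norm (U S).
Proof.
split.
- by move=> b _; exact: U_ge0.
- move=> b _ /eqP; rewrite /Upsilon paddr_eq0; first last.
  + exact: (nN_ge0 hOS (restr_supp _)).
  + exact: (nN_ge0 hOm (suppT _)).
  move=> /andP[/eqP h1 /eqP h2].
  have e1 := nN_eq0 hOm (suppT _) h1; have e2 := nN_eq0 hOS (restr_supp _) h2.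
  by rewrite -(restrC S b) e1 e2 addr0.
- move=> t b _; rewrite /Upsilon !restrZ (nNZ hOm _ (suppT _)) (nNZ hOS _ (restr_supp _)).
  by rewrite mulrDr.
- move=> b c _ _; rewrite /Upsilon !restrD.
  have h1 := nND hOm (suppT (restr S b)) (suppT (restr S c)).
  have h2 := nND hOS (restr_supp (A:=~:S) b) (restr_supp (A:=~:S) c).
  lra.
Qed.

Lemma U_eq0 b : U S b = 0 -> b = 0.
Proof. by move=> h; apply: (nN_eq0 U_norm (suppT b) h). Qed.

Lemma Om_restr_le b : Om (restr S b) <= Om b.
Proof.
have := hle b; have := nN_ge0 hOS (restr_supp (A:=~:S) b); lra.
Qed.

End AllowedS.

Local Notation B := (Bg Om OmS J).
Local Notation Bb := (Bbar Om OmS).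

Lemma Bb_B x : Bb x -> B x.
Proof. by move=> h; apply: conv_in; left. Qed.

Lemma fBb_B x : Bb x -> B (flipv J x).
Proof. by move=> h; apply: conv_in; right; exists x. Qed.

Lemma B_convex x y (l : R) : 0 <= l <= 1 -> B x -> B y -> B (l *: x + (1 - l) *: y).
Proof. exact: conv_comb. Qed.

Lemma B_opp x : B x -> B (- x).
Proof.
apply: conv_map => //.
- exact: opprD.
- by move=> t y; rewrite scalerN.
- move=> y [[S hS Uy]|[y' [S hS Uy'] <-]].
    left; exists S => //=; rewrite /Upsilon /= !restrN (nNN hOm (suppT _)).
    by rewrite (nNN (hA hS).1 (restr_supp _)).
  right; exists (- y'); last by rewrite flipvN.
  exists S => //=; rewrite /Upsilon /= !restrN (nNN hOm (suppT _)).
  by rewrite (nNN (hA hS).1 (restr_supp _)).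
- by rewrite oppr0.
Qed.

Lemma B_flip x : B x -> B (flipv J x).
Proof.
apply: conv_map.
- exact: flipvD.
- exact: flipvZ.
- move=> y [Hy|[y' Hy' <-]]; first by right; exists y.
  by left; rewrite flipvK.
- exact: flipv0.
Qed.

Lemma B0 : B 0.
Proof.
apply: Bb_B; exists [set: 'I_p]%SET; first exact: allowedT.
by rewrite /= /Upsilon !restr0 (nN0 hOm) (nN0 (hA allowedT).1) addr0.
Qed.

Lemma B_scale x (s : R) : 0 <= s <= 1 -> B x -> B (s *: x).
Proof.
move=> /andP[s0 s1] Bx.
have -> : s *: x = ((1 + s) / 2) *: x + (1 - (1 + s) / 2) *: (- x).
  by rewrite scalerN -scaleNr -scalerDl; congr (_ *: _); field.
apply: B_convex; last exact: B_opp.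
  by apply/andP; split; lra.
done.
Qed.

Lemma norm_flip x : `|flipv J x| = `|x|.
Proof.
have H : forall y, `|flipv J y| <= `|y|.
  move=> y; apply: norm_le_coord => // j; rewrite flipvE; case: ifP => _;
  by rewrite ?normrN coord_le_norm.
apply/eqP; rewrite eq_le H /=; by rewrite -{1}(flipvK J x) H.
Qed.

Lemma B_bounded : exists2 C : R, 0 < C & forall x, B x -> `|x| <= C.
Proof.
have : forall S, exists C : R, 0 <= C /\ (allowed Om S -> forall b, U S b <= 1 -> `|b| <= C).
  move=> S; case: (pselect (allowed Om S)) => hS; last by exists 0; split.
  have [m m0 Hm] := norm_lb (U_norm hS).
  exists m^-1; split; first by rewrite invr_ge0 ltW.
  move=> _ b Ub; rewrite -[leRHS]mulr1 ler_pdivlMl //.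
  exact: (le_trans (Hm b (suppT b)) Ub).
move=> /choice [f Hf].
exists (1 + \sum_S f S).
  have : 0 <= \sum_S f S by apply: sumr_ge0 => S _; exact: (Hf S).1.
  lra.
move=> x; apply: conv_bound => y.
have Hy : forall y', Bb y' -> `|y'| <= 1 + \sum_S f S.
  move=> y' [S hS Uy']; apply: (le_trans ((Hf S).2 hS y' Uy')).
  rewrite (bigD1 S) //=.
  have : 0 <= \sum_(S' | S' != S) f S' by apply: sumr_ge0 => S' _; exact: (Hf S').1.
  lra.
by case=> [/Hy //|[y' /Hy h <-]]; rewrite norm_flip.
Qed.



Definition Tset x := [set t : R | 0 < t /\ exists2 c, B c & x = t *: c].
Local Notation gg := (g Om OmS J).

Lemma gE x : gg x = inf (Tset x).
Proof. by []. Qed.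

Lemma T_n0 x : Tset x !=set0.
Proof.
have hS := allowedT; have hU := U_norm hS.
have u0 := U_ge0 hS x.
exists (U [set: 'I_p]%SET x + 1); split; first lra.
exists ((U [set: 'I_p]%SET x + 1)^-1 *: x); last by rewrite scalerA mulfV ?scale1r //; lra.
apply: Bb_B; exists [set: 'I_p]%SET => //=.
rewrite (nNZ hU _ (suppT _)) ger0_norm ?invr_ge0; last lra.
by rewrite ler_pdivrMl; lra.
Qed.

Lemma T_lb x : has_lbound (Tset x).
Proof. by exists 0 => t [t0 _]; apply: ltW. Qed.

Lemma g_ge0 x : 0 <= gg x.
Proof. by apply: lb_le_inf; [exact: T_n0 | move=> t [t0 _]; apply: ltW]. Qed.

Lemma g_le x t : Tset x t -> gg x <= t.
Proof. by move=> h; apply: ge_inf => //; exact: T_lb. Qed.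

Lemma g_ge x M : (forall t, Tset x t -> M <= t) -> M <= gg x.
Proof. by move=> h; apply: lb_le_inf; [exact: T_n0 | exact: h]. Qed.

Lemma g0 : gg 0 = 0.
Proof.
have H : forall t, 0 < t -> gg 0 <= t.
  by move=> t t0; apply: g_le; split => //; exists 0; [exact: B0 | rewrite scaler0].
have := g_ge0 0; case: (ltrP 0 (gg 0)) => h1 h2; last by apply/eqP; rewrite eq_le h1 h2.
have := H (gg 0 / 2); rewrite divr_gt0 //; lra.
Qed.

Lemma gZ_le (a : R) x : gg (a *: x) <= `|a| * gg x.
Proof.
have [->|a0] := eqVneq a 0; first by rewrite scale0r g0 normr0 mul0r.
have na : 0 < `|a| by rewrite normr_gt0.
rewrite -ler_pdivrMl //; apply: g_ge => t [t0 [c Bc ->]].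
rewrite ler_pdivrMl //; apply: g_le; split; first exact: mulr_gt0.
have [ap|an] := ltrP 0 a.
  exists c => //; by rewrite gtr0_norm // scalerA.
exists (- c); first exact: B_opp.
by rewrite ler0_norm // scalerN scalerA mulNr scaleNr opprK.
Qed.

Lemma gZ (a : R) x : gg (a *: x) = `|a| * gg x.
Proof.
apply/eqP; rewrite eq_le gZ_le /=.
have [->|a0] := eqVneq a 0; first by rewrite normr0 mul0r g_ge0.
have na : 0 < `|a| by rewrite normr_gt0.
have := gZ_le a^-1 (a *: x); rewrite scalerA mulVf // scale1r normfV.
by rewrite ler_pdivlMl.
Qed.

Lemma gD x y : gg (x + y) <= gg x + gg y.
Proof.
have key : forall t u, Tset x t -> Tset y u -> gg (x + y) <= t + u.
  move=> t u [t0 [c Bc ->]] [u0 [d Bd ->]]; apply: g_le; split; first exact: addr_gt0.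
  have tu : 0 < t + u by exact: addr_gt0.
  exists ((t / (t + u)) *: c + (1 - t / (t + u)) *: d).
    apply: B_convex => //; apply/andP; split; first by rewrite divr_ge0 // ltW.
    by rewrite ler_pdivrMr // mul1r lerDl ltW.
  rewrite scalerDr !scalerA mulrBr mulr1 mulrCA mulfV ?gt_eqF // mulr1.
  by congr (_ + _); congr (_ *: _); rewrite addrC addKr.
suff : gg (x + y) - gg y <= gg x by lra.
apply: g_ge => t Tt.
suff : gg (x + y) - t <= gg y by lra.
apply: g_ge => u Tu; have := key t u Tt Tu; lra.
Qed.

Lemma g_norm : is_norm gg.
Proof.
split.
- by move=> x _; exact: g_ge0.
- move=> x _ gx0; apply/eqP; apply/negP => /negP x0.
  have [C C0 HC] := B_bounded.
  have nx : 0 < `|x| by rewrite normr_gt0.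
  have : `|x| / C <= gg x.
    apply: g_ge => t [t0 [c Bc ex]].
    rewrite ler_pdivrMr // ex normrZ gtr0_norm //; apply: ler_wpM2l; [exact: ltW | exact: HC].
  by rewrite gx0 leNgt divr_gt0.
- by move=> t x _; exact: gZ.
- by move=> x y _ _; exact: gD.
Qed.

Lemma gN x : gg (- x) = gg x.
Proof. by rewrite -scaleN1r gZ normrN normr1 mul1r. Qed.

Lemma g_le_U S b : allowed Om S -> gg b <= U S b.
Proof.
move=> hS; have hU := U_norm hS.
have [/(U_eq0 hS) ->|U0] := eqVneq (U S b) 0; first by rewrite g0; exact: U_ge0.
have Up : 0 < U S b by rewrite lt_def U0 U_ge0.
apply: g_le; split => //; exists ((U S b)^-1 *: b); last by rewrite scalerA mulfV // scale1r.
apply: Bb_B; exists S => //=.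
by rewrite (nNZ hU _ (suppT _)) normfV gtr0_norm // mulVf.
Qed.

Lemma g_le_Uf S b : allowed Om S -> gg b <= U S (flipv J b).
Proof.
move=> hS; have hU := U_norm hS.
have [h|U0] := eqVneq (U S (flipv J b)) 0.
  have := U_eq0 hS h => /(congr1 (flipv J)); rewrite flipvK flipv0 => ->.
  by rewrite g0; exact: U_ge0.
have Up : 0 < U S (flipv J b) by rewrite lt_def U0 U_ge0.
apply: g_le; split => //; exists (flipv J ((U S (flipv J b))^-1 *: flipv J b)).
  apply: fBb_B; exists S => //=.
  by rewrite (nNZ hU _ (suppT _)) normfV gtr0_norm // mulVf.
by rewrite flipvZ flipvK scalerA mulfV // scale1r.
Qed.

Lemma g_flip b : gg (flipv J b) <= gg b.
Proof.
apply: g_ge => t [t0 [c Bc ->]]; apply: g_le; split => //.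
by exists (flipv J c); [exact: B_flip | rewrite flipvZ].
Qed.

Lemma g_restrC b : gg (restr (~: J) b) <= gg b.
Proof.
rewrite flip_restrC gZ.
have h1 := gD b (- flipv J b); rewrite gN in h1.
have h2 := g_flip b.
rewrite ger0_norm; last lra.
lra.
Qed.

End Main.

Section Final.
Variables (R : realType) (p : nat) (Om : 'rV[R]_p -> R)
  (OmS : {set 'I_p} -> 'rV[R]_p -> R) (J : {set 'I_p}).
Local Notation vec := 'rV[R]_p.
Hypothesis hOm : is_norm Om.
Hypothesis hA : forall S, allowed Om S ->
     is_norm_on (~: S) (OmS S) /\
     forall b, Om (restr S b) + OmS S (restr (~: S) b) <= Om b.
Implicit Types (b c x y z : vec) (S : {set 'I_p}).
Local Notation U := (Upsilon Om OmS).
Local Notation gg := (g Om OmS J).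
Local Notation h := (gdual Om OmS J).
Local Notation B := (Bg Om OmS J).

Lemma dotvC b z : dotv b z = dotv z b.
Proof. by rewrite /dotv; apply: eq_bigr => j _; rewrite mulrC. Qed.

Lemma term_le_h S z : allowed Om S ->
  Num.max (dual (U S) z) (dual (U S) (flipv J z)) <= h z.
Proof. by move=> hS; apply/bigmax_geP; right; exists S => //; exact/asboolP. Qed.

Lemma h_ge0 z : 0 <= h z.
Proof. by apply/bigmax_geP; left. Qed.

Lemma h_le z M : 0 <= M ->
  (forall S, allowed Om S -> dual (U S) z <= M /\ dual (U S) (flipv J z) <= M) -> h z <= M.
Proof.
move=> M0 H; apply/bigmax_leP; split => // S /asboolP hS; rewrite ge_max.
by have [-> ->] := H S hS.
Qed.

Lemma dotB_le z x : B x -> dotv x z <= h z.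
Proof.
apply: conv_dot => y [[S hS Uy]|[y' [S hS Uy'] <-]].
  apply: le_trans (term_le_h z hS); rewrite le_max; apply/orP; left.
  exact: (dual_ge (U_norm hOm hA hS) z (suppT y) Uy).
apply: le_trans (term_le_h z hS); rewrite le_max; apply/orP; right.
rewrite dotv_flip; exact: (dual_ge (U_norm hOm hA hS) _ (suppT y') Uy').
Qed.

Lemma h_norm : is_norm h.
Proof.
have hT := allowedT Om.
split.
- by move=> z _; exact: h_ge0.
- move=> z _ hz0.
  have d0 : dual (U [set: 'I_p]%SET) z = 0.
    apply/eqP; rewrite eq_le (dual_ge0 (U_norm hOm hA hT)) andbT -hz0.
    apply: le_trans (term_le_h z hT); rewrite le_max lexx //.
  by have := dual_eq0 (U_norm hOm hA hT) d0; rewrite restrT.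
- move=> t z _; rewrite /gdual.
  rewrite (big_endo (fun r : R => `|t| * r)) ?mulr0 //; last first.
    by move=> r1 r2; rewrite maxr_pMr.
  apply: eq_bigr => S /asboolP hS; rewrite flipvZ /dual.
  rewrite (dualZ (U_norm hOm hA hS)) (dualZ (U_norm hOm hA hS)) maxr_pMr //.
- move=> z w _ _; apply: h_le; first by rewrite addr_ge0 // h_ge0.
  move=> S hS; have hU := U_norm hOm hA hS.
  have t1 := term_le_h z hS; have t2 := term_le_h w hS.
  rewrite ge_max in t1; rewrite ge_max in t2.
  case/andP: t1 => t1 t1'; case/andP: t2 => t2 t2'.
  split; [apply: le_trans (dualD hU _ _) _ | rewrite flipvD; apply: le_trans (dualD hU _ _) _];
  exact: lerD.
Qed.

Lemma g_dual b : gg b = dual h b.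
Proof.
have hh := h_norm.
have gs : sublin gg.
  split; first exact: (gD J hOm hA).
  by move=> t x t0; rewrite (gZ J hOm hA) ger0_norm.
apply/eqP; rewrite eq_le; apply/andP; split.
  have [z [zle zb]] := HB_dot b gs.
  rewrite -zb dotvC; apply: (dual_ge hh _ (suppT z)).
  apply: h_le => // S hS; have hU := U_norm hOm hA hS; split.
    apply: (dual_le hU) => x _ Ux; apply: le_trans (zle x) _.
    exact: le_trans (g_le_U J hOm hA x hS) Ux.
  apply: (dual_le hU) => x _ Ux; rewrite -dotv_flip; apply: le_trans (zle _) _.
  by apply: le_trans (g_le_Uf J hOm hA _ hS) _; rewrite flipvK.
apply: (dual_le hh) => z _ hz; apply: (g_ge hOm hA) => t [t0 [c Bc ->]].
rewrite dotvZr -[leRHS]mulr1; apply: ler_wpM2l; first exact: ltW.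
by rewrite dotvC; exact: le_trans (dotB_le z Bc) hz.
Qed.

Lemma dual_U S z : allowed Om S ->
  dual (U S) z = Num.max (dual Om (restr S z)) (dual_on (~: S) (OmS S) (restr (~: S) z)).
Proof.
move=> hS; have hU := U_norm hOm hA hS; have hO := (hA hS).1.
set a := dual Om (restr S z); set c := dual_on (~: S) (OmS S) (restr (~: S) z).
have a0 : 0 <= a by exact: (dual_ge0 hOm).
have c0 : 0 <= c by exact: (dual_ge0 hO).
apply/eqP; rewrite eq_le; apply/andP; split.
  apply: (dual_le hU) => b _ Ub.
  rewrite -{1}(restrC S b) dotvDl.
  have e1 : dotv (restr S b) z = dotv (restr S b) (restr S z).
    by rewrite -dotv_restr (restr_id (restr_supp (A:=S) b)).
  have e2 : dotv (restr (~: S) b) z = dotv (restr (~: S) b) (restr (~: S) z).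
    by rewrite -dotv_restr (restr_id (restr_supp (A:=~:S) b)).
  rewrite e1 e2.
  have d1 := dual_mul hOm (restr S z) (suppT (restr S b)).
  have d2 := dual_mul hO (restr (~: S) z) (restr_supp (A:=~:S) b).
  have m1 : a <= Num.max a c by rewrite le_max lexx.
  have m2 : c <= Num.max a c by rewrite le_max lexx orbT.
  have n1 := nN_ge0 hOm (suppT (restr S b)).
  have n2 := nN_ge0 hO (restr_supp (A:=~:S) b).
  have Ub' : Om (restr S b) + OmS S (restr (~: S) b) <= 1 by [].
  have q1 : a * Om (restr S b) <= Num.max a c * Om (restr S b) by rewrite ler_wpM2r.
  have q2 : c * OmS S (restr (~: S) b) <= Num.max a c * OmS S (restr (~: S) b) by rewrite ler_wpM2r.
  have M0 : 0 <= Num.max a c by rewrite le_max a0.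
  have q3 : Num.max a c * (Om (restr S b) + OmS S (restr (~: S) b)) <= Num.max a c.
    by rewrite -[leRHS]mulr1 ler_wpM2l.
  rewrite mulrDr in q3.
  have d1' : dotv (restr S b) (restr S z) <= a * Om (restr S b) := d1.
  have d2' : dotv (restr (~: S) b) (restr (~: S) z) <= c * OmS S (restr (~: S) b) := d2.
  clear d1 d2.
  lra.
rewrite ge_max; apply/andP; split.
  apply: (dual_le hOm) => b _ Ob.
  rewrite -dotv_restr; apply: (dual_ge hU _ (suppT _)).
  rewrite /Upsilon restrCr (nN0 hO) addr0 restr_id; last exact: restr_supp.
  exact: le_trans (Om_restr_le hA hS b) Ob.
apply: (dual_le hO) => b sb Ob.
rewrite -dotv_restr (restr_id sb); apply: (dual_ge hU _ (suppT _)).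
by rewrite /Upsilon (restr_out sb) (nN0 hOm) add0r restr_id.
Qed.

End Final.

Unset Implicit Arguments.

Theorem lemma2 (R : realType) (p : nat) (Om : 'rV[R]_p -> R)
  (OmS : {set 'I_p} -> 'rV[R]_p -> R) (J : {set 'I_p}) :
  is_norm Om ->
  (forall S, allowed Om S ->
     is_norm_on (~: S) (OmS S) /\
     forall b, Om (restr S b) + OmS S (restr (~: S) b) <= Om b) ->
  [/\ is_norm (g Om OmS J),
      (forall S, allowed Om S -> forall b,
         [/\ g Om OmS J b <= Upsilon Om OmS S b,
             Upsilon Om OmS S b <= Om b &
             g Om OmS J b <= Upsilon Om OmS S (flipv J b)]),
      (is_norm (gdual Om OmS J) /\
       (forall b, g Om OmS J b = dual (gdual Om OmS J) b)) /\
      (forall S, allowed Om S -> forall z,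
         dual (Upsilon Om OmS S) z =
         Num.max (dual Om (restr S z)) (dual_on (~: S) (OmS S) (restr (~: S) z))) &
      forall b, g Om OmS J (restr (~: J) b) <= g Om OmS J b].
Proof.
move=> hOm hA; split.
- exact: (g_norm J hOm hA).
- move=> S hS b; split.
  + exact: (g_le_U J hOm hA b hS).
  + exact: (U_le hA hS b).
  + exact: (g_le_Uf J hOm hA b hS).
- split; first split.
  + exact: (h_norm J hOm hA).
  + move=> b; exact: (g_dual J hOm hA b).
  + move=> S hS z; exact: (dual_U hOm hA z hS).
- move=> b; exact: (g_restrC J hOm hA b).
Qed.
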